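(* Let $(C,\mathfrak p,\mathfrak d)$ be a regular $q$-magma coalgebra. For all $1\le i\le n-1$ we have $\mathfrak p_{i1}^i=i\,\mathfrak p_{11}^1(\mathfrak p_{10}^1)^{i-1}$ and $\mathfrak d_{i1}^i=i\,\mathfrak d_{11}^1(\mathfrak d_{10}^1)^{i-1}$.
   Context: $K$ is an algebraically closed field of characteristic $0$ and $n\ge2$. $C$ is the coalgebra dual to $K[y]/\langle y^n\rangle$: basis $x_0,\dots,x_{n-1}$, $\Delta(x_i)=\sum_{j+k=i}x_j\otimes x_k$, $\epsilon(x_i)=\delta_{i0}$; $C\otimes C$ has the tensor product coalgebra structure; Sweedler notation $\Delta(b)=b_{(1)}\otimes b_{(2)}$. For linear maps $\mathfrak p,\mathfrak d\colon C\otimes C\to C$ write $a\cdot b=\mathfrak p(a\otimes b)$, $a:b=\mathfrak d(a\otimes b)$, $\mathfrak p(x_i\otimes x_j)=\sum_{k=0}^{n-1}\mathfrak p_{ij}^kx_k$, $\mathfrak d(x_i\otimes x_j)=\sum_{k=0}^{n-1}\mathfrak d_{ij}^kx_k$. A triple $(C,\mathfrak p,\mathfrak d)$ with $\mathfrak p,\mathfrak d$ coalgebra morphisms is a regular $q$-magma coalgebra if there are coalgebra morphisms $a\otimes b\mapsto a^b$, $a\otimes b\mapsto a_b$ from $C\otimes C$ to $C$ with $a^{b_{(1)}}\cdot b_{(2)}=(a\cdot b_{(1)})^{b_{(2)}}=\epsilon(b)a$ and $(a:b_{(2)})_{b_{(1)}}=a_{b_{(2)}}:b_{(1)}=\epsilon(b)a$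 for all $a,b\in C$. *)

(* Defs.v *)
From mathcomp Require Import all_boot all_order all_algebra.
Set Implicit Arguments. Unset Strict Implicit. Unset Printing Implicit Defensive.
Import GRing.Theory.
Local Open Scope ring_scope.

(* A linear map C (x) C -> C, where C has basis x_0..x_{n-1}, is encoded by its
   structure constants  f(x_i (x) x_j) = \sum_k F i j k x_k  (only i,j,k < n matter). *)
Definition sconst (K : Type) := nat -> nat -> nat -> K.

(* F is a coalgebra morphism C (x) C -> C, where
   Delta(x_i) = \sum_{a+b=i} x_a (x) x_b, eps(x_i) = delta_{i0},
   and C (x) C carries the tensor product coalgebra structure. *)
Definition coalg_morph (K : nzRingType) (n : nat) (F : sconst K) : Prop :=
  (forall i j, (i < n)%N -> (j < n)%N ->
     F i j 0%N = ((i == 0%N) && (j == 0%N))%:R) /\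
  (forall i j k l, (i < n)%N -> (j < n)%N -> (k < n)%N -> (l < n)%N ->
     (if (k + l < n)%N then F i j (k + l)%N else 0) =
     \sum_(a < i.+1) \sum_(c < j.+1) F a c k * F (i - a)%N (j - c)%N l).

(* (C, p, d) is a regular q-magma coalgebra: p, d are coalgebra morphisms and
   there exist coalgebra morphisms U (a (x) b |-> a^b), V (a (x) b |-> a_b) with
   a^{b(1)} . b(2) = (a . b(1))^{b(2)} = eps(b) a and
   (a : b(2))_{b(1)} = a_{b(2)} : b(1) = eps(b) a,
   checked on basis elements a = x_i, b = x_j, coefficient of x_m. *)
Definition regular_qmagma (K : nzRingType) (n : nat) (P D : sconst K) : Prop :=
  coalg_morph n P /\ coalg_morph n D /\
  exists U V : sconst K,
    coalg_morph n U /\ coalg_morph n V /\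
    (forall i j m, (i < n)%N -> (j < n)%N -> (m < n)%N ->
       [/\ \sum_(c < j.+1) \sum_(k < n) U i c k * P k (j - c)%N m
             = ((j == 0%N) && (i == m))%:R,
           \sum_(c < j.+1) \sum_(k < n) P i c k * U k (j - c)%N m
             = ((j == 0%N) && (i == m))%:R,
           \sum_(c < j.+1) \sum_(k < n) D i (j - c)%N k * V k c m
             = ((j == 0%N) && (i == m))%:R &
           \sum_(c < j.+1) \sum_(k < n) V i (j - c)%N k * D k c m
             = ((j == 0%N) && (i == m))%:R]).

(* Main.v *)
Require Import Defs.
From mathcomp Require Import all_boot all_order all_algebra.
From mathcomp Require Import zify ring.
Import GRing.Theory.
Local Open Scope ring_scope.

Lemma sum_trunc (K : nzRingType) (f : nat -> K) m N : (m <= N)%N ->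
  (forall a, (m <= a)%N -> (a < N)%N -> f a = 0) ->
  \sum_(a < N) f a = \sum_(a < m) f a.
Proof.
move=> hmN h; rewrite -!(big_mkord xpredT) (big_cat_nat (leq0n m) hmN) /=.
have -> : \sum_(m <= i < N) f i = 0.
  rewrite big_nat_cond big1 // => a /andP[/andP[h1 h2] _]; exact: h.
by rewrite addr0.
Qed.

Section S.
Variables (K : fieldType) (n : nat) (F : sconst K).
Hypothesis hF : coalg_morph n F.
Hypothesis hn : (1 < n)%N.

Lemma convS i j k : (i < n)%N -> (j < n)%N -> (k.+1 < n)%N ->
  F i j k.+1 = \sum_(a < i.+1) \sum_(c < j.+1) F a c 1 * F (i - a)%N (j - c)%N k.
Proof.
move=> hi hj hk; have := hF.2 i j 1 k hi hj hn (ltnW hk).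
by rewrite add1n hk.
Qed.

Lemma F0 i j : (i < n)%N -> (j < n)%N -> F i j 0 = ((i == 0%N) && (j == 0%N))%:R.
Proof. exact: hF.1. Qed.

Lemma F001 : F 0 0 1 = 0.
Proof.
have hp : forall m, (m < n)%N -> F 0 0 m = F 0 0 1 ^+ m.
  elim=> [|m IH] hm; first by rewrite F0 ?expr0 //; lia.
  rewrite convS //; try lia.
  rewrite !big_ord1 /= IH ?exprS //; last lia.
  idtac.
have := hF.2 0 0 1 n.-1 ltac:(lia) ltac:(lia) hn ltac:(lia).
rewrite ifF; last by lia.
rewrite !big_ord1 /= (hp n.-1); last by lia.
rewrite -exprS => /esym/eqP; rewrite expf_eq0 => /andP[_ /eqP]; done.
Qed.

Lemma L1 k : (k < n)%N -> forall i j, (i < n)%N -> (j < n)%N -> (i + j < k)%N ->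
  F i j k = 0.
Proof.
elim: k => [|k IH] hk i j hi hj hij; first by [].
rewrite convS //; try lia.
rewrite big1 // => a _; rewrite big1 // => c _.
have ha := ltn_ord a; have hc := ltn_ord c.
case: (boolP ((a == 0 :> nat) && (c == 0 :> nat))) => [/andP[/eqP -> /eqP ->]|hac].
  by rewrite F001 mul0r.
rewrite IH ?mulr0 //; lia.
Qed.

Local Notation al := (F 1 0 1).
Local Notation be := (F 0 1 1).
Local Notation ga := (F 1 1 1).

Lemma Fi0 i : (i < n)%N -> F i 0 i = al ^+ i.
Proof.
elim: i => [|i IH] hi; first by rewrite F0.
rewrite convS //; try lia.
under eq_bigr => a _ do rewrite big_ord1 /= subn0.
rewrite (@sum_trunc _ (fun a => F a 0 1 * F (i.+1 - a)%N 0 i) 2) //; last first.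
  by move=> a h1 h2; rewrite (@L1 i) ?mulr0 //; lia.
rewrite !big_ord_recr big_ord0 /= F001 mul0r !add0r subSS subn0 IH ?exprS //; lia.
Qed.

Lemma Fi1 i : (i.+1 < n)%N -> F i 1 i.+1 = i.+1%:R * al ^+ i * be.
Proof.
elim: i => [|i IH] hi; first by rewrite mul1r expr0 mul1r.
rewrite convS //; try lia.
under eq_bigr => a _ do rewrite !big_ord_recr big_ord0 /= add0r.
rewrite (@sum_trunc _ (fun a => F a 0 1 * F (i.+1 - a)%N 1 i.+1 + F a 1 1 * F (i.+1 - a)%N 0 i.+1) 2) //; last first.
  by move=> a h1 h2; rewrite !(@L1 i.+1) ?mulr0 ?addr0 //; lia.
rewrite !big_ord_recr big_ord0 /= F001 mul0r !add0r subSS !subn0 IH; last lia.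
rewrite Fi0; last lia.
rewrite (@L1 i.+1 _ i 0); try lia.
rewrite mulr0 addr0 !exprS; set x := al ^+ i.
rewrite [(i.+2)%:R]mulrSr [(i.+1)%:R]mulrSr.
ring.
Qed.


Lemma Fmain (hb : be = 0) i : (i.+1 < n)%N -> F i.+1 1 i.+1 = i.+1%:R * ga * al ^+ i.
Proof.
elim: i => [|i IH] hi; first by rewrite mul1r expr0 mulr1.
rewrite convS //; try lia.
under eq_bigr => a _ do rewrite !big_ord_recr big_ord0 /= add0r.
rewrite (@sum_trunc _ (fun a => F a 0 1 * F (i.+2 - a)%N 1 i.+1 + F a 1 1 * F (i.+2 - a)%N 0 i.+1) 3) //; last first.
  by move=> a h1 h2; rewrite !(@L1 i.+1) ?mulr0 ?addr0 //; lia.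
rewrite !big_ord_recr big_ord0 /= F001 hb !mul0r !add0r !subSS !subn0 IH; last lia.
rewrite Fi1; last lia.
rewrite hb (@Fi0 i.+1); last lia.
rewrite (@L1 i.+1 _ i 0); try lia.
rewrite !exprS; ring.
Qed.

Lemma be0 : [pchar K] =i pred0 -> al != 0 -> be = 0.
Proof.
move=> hc ha.
have [m em] : exists m, n = m.+2 by exists n.-2; lia.
have := hF.2 m.+1 1 1 m.+1 ltac:(lia) ltac:(lia) hn ltac:(lia).
rewrite ifF; last by lia.
under eq_bigr => a _ do rewrite !big_ord_recr big_ord0 /= add0r.
rewrite (@sum_trunc _ (fun a => F a 0 1 * F (m.+1 - a)%N 1 m.+1 + F a 1 1 * F (m.+1 - a)%N 0 m.+1) 2) //; last first.
  by move=> a h1 h2; rewrite !(@L1 m.+1) ?mulr0 ?addr0 //; lia.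
rewrite !big_ord_recr big_ord0 /= F001 !mul0r !add0r !subn0 subSS subn0.
rewrite Fi1; last lia.
rewrite Fi0; last lia.
rewrite (@L1 m.+1 _ m 0); try lia.
rewrite mulr0 addr0.
have -> : be * al ^+ m.+1 + al * ((m.+1)%:R * al ^+ m * be) = (m.+2)%:R * al ^+ m.+1 * be.
  rewrite exprS; rewrite [(m.+2)%:R]mulrSr; ring.
move/esym/eqP; rewrite !mulf_eq0 expf_eq0 (negbTE ha) andbF orbF.
have /GRing.pcharf0P hc' := hc.
by rewrite hc' /= => /eqP.
Qed.

Lemma al_nz (G : sconst K) : \sum_(k < n) F 1 0 k * G k 0 1 = 1 -> al != 0.
Proof.
rewrite (@sum_trunc _ (fun k => F 1 0 k * G k 0 1) 2) //; last first.
  by move=> a h1 h2; rewrite L1 ?mul0r //; lia.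
rewrite !big_ord_recr big_ord0 /= F0 //; last lia.
rewrite mul0r !add0r => h; apply/eqP => h0; move: h; rewrite h0 mul0r => /eqP.
by rewrite eq_sym oner_eq0.
Qed.

Lemma final (hc : [pchar K] =i pred0) (G : sconst K) :
  \sum_(k < n) F 1 0 k * G k 0 1 = 1 ->
  forall i, (1 <= i)%N -> (i <= n - 1)%N ->
  F i 1 i = i%:R * ga * al ^+ (i - 1).
Proof.
move=> hG [|i] // _ hi.
rewrite subSS subn0 Fmain //; last lia.
apply: be0 => //. exact: (al_nz _ hG).
Qed.

End S.

Theorem proposition1p15 (K : closedFieldType) (n : nat) (P D : sconst K) :
  [pchar K] =i pred0 -> (2 <= n)%N ->
  regular_qmagma n P D ->
  forall i : nat, (1 <= i)%N -> (i <= n - 1)%N ->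
    P i 1%N i = i%:R * P 1%N 1%N 1%N * (P 1%N 0%N 1%N) ^+ (i - 1) /\
    D i 1%N i = i%:R * D 1%N 1%N 1%N * (D 1%N 0%N 1%N) ^+ (i - 1).
Proof.
move=> hc hn [hP [hD [U [V [_ [_ h]]]]]] i h1 h2.
have h10 : (1 < n)%N by [].
have [_ hb _ _] := h 1%N 0%N 1%N h10 ltac:(lia) h10.
have [_ _ hd _] := h 1%N 0%N 1%N h10 ltac:(lia) h10.
rewrite big_ord1 /= subnn in hb; rewrite big_ord1 /= subnn in hd.
split.
- exact: (@final _ _ _ hP h10 hc _ hb i h1 h2).
- exact: (@final _ _ _ hD h10 hc _ hd i h1 h2).
Qed.
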